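(* Consider the system of ordinary differential equations \[ \begin{aligned} \frac{dr_a}{dt} &= m_a\left(\frac{(p_a/\theta_{aa})^{n_{aa}}}{1+(p_a/\theta_{aa})^{n_{aa}}}+\frac{1}{1+(p_b/\theta_b)^{n_b}}\right)-\gamma_a r_a+A_1,\\ \frac{dr_b}{dt} &= \frac{m_b}{1+(p_a/\theta_a)^{n_a}}-\gamma_b r_b+B_1,\\ \frac{dp_a}{dt} &= k_a r_a-\delta_a p_a,\qquad \frac{dp_b}{dt} = k_b r_b-\delta_b p_b, \end{aligned} \] where $m_a,m_b,\gamma_a,\gamma_b,k_a,k_b,\delta_a,\delta_b,\theta_a,\theta_b,\theta_{aa}>0$, $A_1,B_1\ge 0$, and $n_a,n_b,n_{aa}$ are positive integers. Let $S^*=(r_a^*,r_b^*,p_a^*,p_b^* )$ be a steady state of this system with $p_a^*>0$, $p_b^*>0$. Set, with $p_a=p_a^*$, $p_b=p_b^*$, \[ X=\frac{m_a n_{aa}\theta_{aa}^{n_{aa}}p_a^{n_{aa}-1}}{(\theta_{aa}^{n_{aa}}+p_a^{n_{aa}})^2},\quad Y=-\frac{m_a n_b\theta_b^{n_b}p_b^{n_b-1}}{(\theta_b^{n_b}+p_b^{n_b})^2},\quad Z=-\frac{m_b n_a p_a^{n_a-1}\theta_a^{n_a}}{(p_a^{n_a}+\theta_a^{n_a})^2}, \] and \[ \begin{aligned} \epsilon_1&=\gamma_a+\gamma_b+\delta_a+\delta_b,\\ \epsilon_2&=\gamma_a\gamma_b+(\gamma_a+\gamma_b)(\delta_a+\delta_b)+\delta_a\delta_b-k_aX,\\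 \epsilon_3&=\delta_a\delta_b(\gamma_a+\gamma_b)+(\delta_a+\delta_b)\gamma_a\gamma_b-k_a(\delta_b+\gamma_b)X,\\ \epsilon_4&=\gamma_a\gamma_b\delta_a\delta_b-k_ak_bYZ-k_a\gamma_b\delta_bX. \end{aligned} \] If $\epsilon_1>0$, $\epsilon_3>0$, $\epsilon_4>0$ and $\epsilon_1\epsilon_2\epsilon_3-\epsilon_1^2\epsilon_4-\epsilon_3^2>0$, then $S^*$ is locally asymptotically stable.
   Context: This models a two-gene network in which gene $a$ is co-regulated by activation from its own protein $p_a$ and repression by protein $p_b$ (combined via a non-competitive OR logic, i.e. the sum of the two regulatory terms), and gene $b$ is repressed by $p_a$; $r_a,r_b$ are mRNA concentrations and $p_a,p_b$ protein concentrations. A steady state is a point where all four right-hand sides vanish. *)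

(* Defs.v *)
From Stdlib Require Import Reals.
Open Scope R_scope.

Record params := mkParams {
  m_a : R; m_b : R; gamma_a : R; gamma_b : R;
  k_a : R; k_b : R; delta_a : R; delta_b : R;
  theta_a : R; theta_b : R; theta_aa : R;
  A_1 : R; B_1 : R;
  n_a : nat; n_b : nat; n_aa : nat }.

Record state := mkState { ra : R; rb : R; pa : R; pb : R }.

Definition f_ra (P : params) (s : state) : R :=
  m_a P * ((pa s / theta_aa P) ^ n_aa P / (1 + (pa s / theta_aa P) ^ n_aa P)
           + 1 / (1 + (pb s / theta_b P) ^ n_b P))
  - gamma_a P * ra s + A_1 P.
Definition f_rb (P : params) (s : state) : R :=
  m_b P / (1 + (pa s / theta_a P) ^ n_a P) - gamma_b P * rb s + B_1 P.
Definition f_pa (P : params) (s : state) : R := k_a P * ra s - delta_a P * pa s.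
Definition f_pb (P : params) (s : state) : R := k_b P * rb s - delta_b P * pb s.

Definition steady_state (P : params) (s : state) : Prop :=
  f_ra P s = 0 /\ f_rb P s = 0 /\ f_pa P s = 0 /\ f_pb P s = 0.

(* A (forward-global) solution: x is differentiable on an open interval
   (a, +oo) with a < 0 (so on a neighbourhood of [0,+oo)) and satisfies the ODE. *)
Definition is_solution (P : params) (x : R -> state) : Prop :=
  exists a, a < 0 /\ forall t, a < t ->
    derivable_pt_lim (fun u => ra (x u)) t (f_ra P (x t)) /\
    derivable_pt_lim (fun u => rb (x u)) t (f_rb P (x t)) /\
    derivable_pt_lim (fun u => pa (x u)) t (f_pa P (x t)) /\
    derivable_pt_lim (fun u => pb (x u)) t (f_pb P (x t)).

Definition dist4 (s s' : state) : R :=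
  Rmax (Rmax (Rabs (ra s - ra s')) (Rabs (rb s - rb s')))
       (Rmax (Rabs (pa s - pa s')) (Rabs (pb s - pb s'))).

Definition locally_asymptotically_stable (P : params) (s : state) : Prop :=
  (forall eps, 0 < eps -> exists del, 0 < del /\
     forall x, is_solution P x -> dist4 (x 0) s < del ->
       forall t, 0 <= t -> dist4 (x t) s < eps) /\
  (exists del, 0 < del /\
     forall x, is_solution P x -> dist4 (x 0) s < del ->
       forall e, 0 < e -> exists T, forall t, T <= t -> dist4 (x t) s < e).

Definition Xq (P : params) (p_a : R) : R :=
  m_a P * INR (n_aa P) * theta_aa P ^ n_aa P * p_a ^ (n_aa P - 1)
  / (theta_aa P ^ n_aa P + p_a ^ n_aa P) ^ 2.
Definition Yq (P : params) (p_b : R) : R :=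
  - (m_a P * INR (n_b P) * theta_b P ^ n_b P * p_b ^ (n_b P - 1)
     / (theta_b P ^ n_b P + p_b ^ n_b P) ^ 2).
Definition Zq (P : params) (p_a : R) : R :=
  - (m_b P * INR (n_a P) * p_a ^ (n_a P - 1) * theta_a P ^ n_a P
     / (p_a ^ n_a P + theta_a P ^ n_a P) ^ 2).

Definition epsilon1 (P : params) : R :=
  gamma_a P + gamma_b P + delta_a P + delta_b P.
Definition epsilon2 (P : params) (s : state) : R :=
  gamma_a P * gamma_b P + (gamma_a P + gamma_b P) * (delta_a P + delta_b P)
  + delta_a P * delta_b P - k_a P * Xq P (pa s).
Definition epsilon3 (P : params) (s : state) : R :=
  delta_a P * delta_b P * (gamma_a P + gamma_b P)
  + (delta_a P + delta_b P) * gamma_a P * gamma_b P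
  - k_a P * (delta_b P + gamma_b P) * Xq P (pa s).
Definition epsilon4 (P : params) (s : state) : R :=
  gamma_a P * gamma_b P * delta_a P * delta_b P
  - k_a P * k_b P * Yq P (pb s) * Zq P (pa s)
  - k_a P * gamma_b P * delta_b P * Xq P (pa s).

(* Main.v *)
Require Import Defs.
From Stdlib Require Import Reals Lra Lia Psatz.
From Coquelicot Require Coquelicot.
Open Scope R_scope.

Definition ev (l u : state) : R := ra l * ra u + rb l * rb u + pa l * pa u + pb l * pb u.
Definition ssub (x y : state) : state :=
  mkState (ra x - ra y) (rb x - rb y) (pa x - pa y) (pb x - pb y).
Definition sadd (x y : state) : state :=
  mkState (ra x + ra y) (rb x + rb y) (pa x + pa y) (pb x + pb y).
Definition sscale (c : R) (x : state) : state :=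
  mkState (c * ra x) (c * rb x) (c * pa x) (c * pb x).
Definition nrm (u : state) : R :=
  Rmax (Rmax (Rabs (ra u)) (Rabs (rb u))) (Rmax (Rabs (pa u)) (Rabs (pb u))).
Definition l1n (l : state) : R := Rabs (ra l) + Rabs (rb l) + Rabs (pa l) + Rabs (pb l).

Lemma dist4_nrm x s : dist4 x s = nrm (ssub x s).
Proof. reflexivity. Qed.

Lemma nrm_ge0 u : 0 <= nrm u.
Proof. unfold nrm. eapply Rle_trans; [apply Rabs_pos| eapply Rle_trans; [apply Rmax_l|apply Rmax_l]]. Qed.

Lemma nrm_ra u : Rabs (ra u) <= nrm u.
Proof. unfold nrm. eapply Rle_trans; [apply Rmax_l|apply Rmax_l]. Qed.
Lemma nrm_rb u : Rabs (rb u) <= nrm u.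
Proof. unfold nrm. eapply Rle_trans; [apply Rmax_r|apply Rmax_l]. Qed.
Lemma nrm_pa u : Rabs (pa u) <= nrm u.
Proof. unfold nrm. eapply Rle_trans; [apply Rmax_l|apply Rmax_r]. Qed.
Lemma nrm_pb u : Rabs (pb u) <= nrm u.
Proof. unfold nrm. eapply Rle_trans; [apply Rmax_r|apply Rmax_r]. Qed.

Lemma nrm_le u M : Rabs (ra u) <= M -> Rabs (rb u) <= M -> Rabs (pa u) <= M -> Rabs (pb u) <= M ->
  nrm u <= M.
Proof. intros. unfold nrm. repeat apply Rmax_lub; auto. Qed.

Lemma nrm_lt u M : Rabs (ra u) < M -> Rabs (rb u) < M -> Rabs (pa u) < M -> Rabs (pb u) < M ->
  nrm u < M.
Proof. intros. unfold nrm. repeat apply Rmax_lub_lt; auto. Qed.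

Lemma ev_bound l u : Rabs (ev l u) <= l1n l * nrm u.
Proof.
  unfold ev, l1n.
  pose proof (nrm_ra u); pose proof (nrm_rb u); pose proof (nrm_pa u); pose proof (nrm_pb u).
  eapply Rle_trans; [apply Rabs_triang|].
  eapply Rle_trans; [apply Rplus_le_compat_r, Rabs_triang|].
  eapply Rle_trans; [apply Rplus_le_compat_r, Rplus_le_compat_r, Rabs_triang|].
  rewrite !Rabs_mult.
  pose proof (Rabs_pos (ra l)); pose proof (Rabs_pos (rb l)); pose proof (Rabs_pos (pa l)); pose proof (Rabs_pos (pb l)).
  assert (Rabs (ra l) * Rabs (ra u) <= Rabs (ra l) * nrm u) by (apply Rmult_le_compat_l; auto).
  assert (Rabs (rb l) * Rabs (rb u) <= Rabs (rb l) * nrm u) by (apply Rmult_le_compat_l; auto).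
  assert (Rabs (pa l) * Rabs (pa u) <= Rabs (pa l) * nrm u) by (apply Rmult_le_compat_l; auto).
  assert (Rabs (pb l) * Rabs (pb u) <= Rabs (pb l) * nrm u) by (apply Rmult_le_compat_l; auto).
  lra.
Qed.

Lemma l1n_ge0 l : 0 <= l1n l.
Proof. unfold l1n. pose proof (Rabs_pos (ra l)); pose proof (Rabs_pos (rb l)); pose proof (Rabs_pos (pa l)); pose proof (Rabs_pos (pb l)). lra. Qed.

Lemma ev_sadd l u v : ev l (sadd u v) = ev l u + ev l v.
Proof. unfold ev, sadd; simpl; ring. Qed.

Lemma dpl_add f g t a b : derivable_pt_lim f t a -> derivable_pt_lim g t b ->
  derivable_pt_lim (fun u => f u + g u) t (a + b).
Proof. intros; apply (derivable_pt_lim_plus f g t a b); auto. Qed.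
Lemma dpl_mul f g t a b : derivable_pt_lim f t a -> derivable_pt_lim g t b ->
  derivable_pt_lim (fun u => f u * g u) t (a * g t + f t * b).
Proof. intros; apply (derivable_pt_lim_mult f g t a b); auto. Qed.
Lemma dpl_const c t : derivable_pt_lim (fun _ => c) t 0.
Proof. apply (derivable_pt_lim_const c t). Qed.
Lemma dpl_id t : derivable_pt_lim (fun u => u) t 1.
Proof. apply derivable_pt_lim_id. Qed.
Lemma dpl_eq f t a b : derivable_pt_lim f t a -> a = b -> derivable_pt_lim f t b.
Proof. intros H ->; auto. Qed.
Lemma dpl_cmul c f t a : derivable_pt_lim f t a -> derivable_pt_lim (fun u => c * f u) t (c * a).
Proof. intros H. pose proof (dpl_mul (fun _ => c) f t 0 a (dpl_const c t) H) as H'. cbv beta in H'.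
  eapply dpl_eq; [exact H'|ring]. Qed.
Lemma dpl_subc f t a k : derivable_pt_lim f t a -> derivable_pt_lim (fun u => f u - k) t a.
Proof. intros H. pose proof (dpl_add f (fun _ => - k) t a 0 H (dpl_const _ t)) as H'. cbv beta in H'.
  eapply dpl_eq; [exact H'|ring]. Qed.

Definition Fv (P : params) (x : state) : state :=
  mkState (f_ra P x) (f_rb P x) (f_pa P x) (f_pb P x).

Lemma ev_deriv P (x : R -> state) (S l : state) t :
  derivable_pt_lim (fun u => ra (x u)) t (f_ra P (x t)) ->
  derivable_pt_lim (fun u => rb (x u)) t (f_rb P (x t)) ->
  derivable_pt_lim (fun u => pa (x u)) t (f_pa P (x t)) ->
  derivable_pt_lim (fun u => pb (x u)) t (f_pb P (x t)) ->
  derivable_pt_lim (fun u => ev l (ssub (x u) S)) t (ev l (Fv P (x t))).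
Proof.
  intros H1 H2 H3 H4. unfold ev, ssub, Fv; simpl.
  repeat apply dpl_add; apply dpl_cmul; apply dpl_subc; auto.
Qed.

Lemma cont_extract f x : continuity_pt f x -> forall eps, 0 < eps ->
  exists d, 0 < d /\ forall y, Rabs (y - x) < d -> Rabs (f y - f x) < eps.
Proof.
  intros H eps He. destruct (H eps He) as [d [Hd Hf]]. exists d; split; auto.
  intros y Hy. destruct (Req_dec y x) as [->|Hne].
  - unfold Rminus; rewrite Rplus_opp_r, Rabs_R0; auto.
  - apply (Hf y). split; [split; [exact I| auto] | exact Hy].
Qed.

Lemma dpl_cont f t l : derivable_pt_lim f t l -> continuity_pt f t.
Proof. intros H. apply derivable_continuous_pt. exists l. exact H. Qed.

Lemma barrier (G G' : R -> R) a rho : a < 0 ->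
  (forall t, a < t -> derivable_pt_lim G t (G' t)) -> G 0 < rho ->
  (forall t, 0 <= t -> G t <= rho -> G' t <= 0) ->
  forall t, 0 <= t -> G t <= G 0.
Proof.
  intros Ha HD H0 HN t1 Ht1.
  destruct (Rle_dec (G t1) (G 0)) as [|Hgt]; auto. exfalso.
  apply Rnot_le_lt in Hgt.
  set (E := fun s => 0 <= s <= t1 /\ G s <= G 0).
  assert (Hb : bound E) by (exists t1; intros s [[_ Hs] _]; auto).
  assert (He : exists s, E s) by (exists 0; split; [lra| lra]).
  destruct (completeness E Hb He) as [s0 [Hub Hlub]].
  assert (Hs0 : 0 <= s0) by (apply Hub; split; lra).
  assert (Hs1 : s0 <= t1) by (apply Hlub; intros s [[_ Hs] _]; auto).
  assert (Hc : continuity_pt G s0) by (apply (dpl_cont _ _ (G' s0)); apply HD; lra).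
  assert (HG0 : G s0 <= G 0).
  { destruct (Rle_dec (G s0) (G 0)) as [|Hn]; auto. apply Rnot_le_lt in Hn.
    destruct (cont_extract G s0 Hc (G s0 - G 0)) as [d [Hd Hf]]; [lra|].
    destruct (Rle_dec s0 (s0 - d)) as [|Hn2]; [lra|].
    assert (Hex : exists s, E s /\ s0 - d < s).
    { destruct (Classical_Prop.classic (exists s, E s /\ s0 - d < s)) as [|Hno]; auto.
      exfalso; apply Hn2; apply Hlub. intros s Hs.
      destruct (Rle_dec s (s0 - d)) as [|Hn3]; auto. exfalso; apply Hno; exists s; split; auto; lra. }
    destruct Hex as [s [[Hs1' Hs2'] Hs3']].
    assert (s <= s0) by (apply Hub; split; auto).
    assert (Rabs (s - s0) < d) by (rewrite Rabs_left1; lra).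
    specialize (Hf s H1). apply Rabs_def2 in Hf. lra. }
  assert (Hlt : s0 < t1) by (destruct (Req_dec s0 t1); [subst; lra | lra]).
  destruct (cont_extract G s0 Hc (rho - G s0)) as [d [Hd Hf]]; [lra|].
  set (t2 := Rmin (s0 + d/2) t1).
  assert (Ht2a : s0 < t2) by (unfold t2; apply Rmin_glb_lt; lra).
  assert (Ht2b : t2 <= t1) by (apply Rmin_r).
  assert (Ht2c : t2 <= s0 + d/2) by (apply Rmin_l).
  destruct (MVT_cor2 G G' s0 t2 Ht2a) as [c [Hmvt Hc2]].
  { intros c Hc2. apply HD. lra. }
  assert (HGc : G c <= rho).
  { assert (Rabs (c - s0) < d) by (rewrite Rabs_right; lra).
    specialize (Hf c H). apply Rabs_def2 in Hf. lra. }
  specialize (HN c ltac:(lra) HGc).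
  assert (G t2 <= G s0) by nra.
  assert (t2 <= s0) by (apply Hub; split; [lra|lra]).
  lra.
Qed.

Record quad := mkQ { w1 : R; w2 : R; w3 : R; w4 : R;
                     q1 : state; q2 : state; q3 : state; q4 : state }.
Definition Vq (q : quad) (u : state) : R :=
  w1 q * (ev (q1 q) u * ev (q1 q) u) + w2 q * (ev (q2 q) u * ev (q2 q) u)
  + w3 q * (ev (q3 q) u * ev (q3 q) u) + w4 q * (ev (q4 q) u * ev (q4 q) u).
Definition Vdq (q : quad) (u v : state) : R :=
  2 * (w1 q * ev (q1 q) u * ev (q1 q) v + w2 q * ev (q2 q) u * ev (q2 q) v
  + w3 q * ev (q3 q) u * ev (q3 q) v + w4 q * ev (q4 q) u * ev (q4 q) v).
Definition qpos (q : quad) : Prop := 0 <= w1 q /\ 0 <= w2 q /\ 0 <= w3 q /\ 0 <= w4 q.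
Definition Mq (q : quad) : R :=
  w1 q * (l1n (q1 q) * l1n (q1 q)) + w2 q * (l1n (q2 q) * l1n (q2 q))
  + w3 q * (l1n (q3 q) * l1n (q3 q)) + w4 q * (l1n (q4 q) * l1n (q4 q)).

Lemma Vq_ge0 q u : qpos q -> 0 <= Vq q u.
Proof.
  intros [? [? [? ?]]]. unfold Vq.
  pose proof (Rle_0_sqr (ev (q1 q) u)); pose proof (Rle_0_sqr (ev (q2 q) u));
  pose proof (Rle_0_sqr (ev (q3 q) u)); pose proof (Rle_0_sqr (ev (q4 q) u)).
  unfold Rsqr in *.
  assert (0 <= w1 q * (ev (q1 q) u * ev (q1 q) u)) by (apply Rmult_le_pos; auto).
  assert (0 <= w2 q * (ev (q2 q) u * ev (q2 q) u)) by (apply Rmult_le_pos; auto).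
  assert (0 <= w3 q * (ev (q3 q) u * ev (q3 q) u)) by (apply Rmult_le_pos; auto).
  assert (0 <= w4 q * (ev (q4 q) u * ev (q4 q) u)) by (apply Rmult_le_pos; auto).
  lra.
Qed.

Lemma Mq_ge0 q : qpos q -> 0 <= Mq q.
Proof.
  intros [? [? [? ?]]]. unfold Mq.
  pose proof (l1n_ge0 (q1 q)); pose proof (l1n_ge0 (q2 q)); pose proof (l1n_ge0 (q3 q)); pose proof (l1n_ge0 (q4 q)).
  assert (0 <= w1 q * (l1n (q1 q) * l1n (q1 q))) by (apply Rmult_le_pos; nra).
  assert (0 <= w2 q * (l1n (q2 q) * l1n (q2 q))) by (apply Rmult_le_pos; nra).
  assert (0 <= w3 q * (l1n (q3 q) * l1n (q3 q))) by (apply Rmult_le_pos; nra).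
  assert (0 <= w4 q * (l1n (q4 q) * l1n (q4 q))) by (apply Rmult_le_pos; nra).
  lra.
Qed.

Lemma term_sq_le w l u : 0 <= w -> w * (ev l u * ev l u) <= w * (l1n l * l1n l) * (nrm u * nrm u).
Proof.
  intros Hw. pose proof (ev_bound l u). pose proof (Rabs_pos (ev l u)).
  assert (ev l u * ev l u = Rabs (ev l u) * Rabs (ev l u)) by (rewrite <- Rabs_mult; rewrite Rabs_right; [auto| apply Rle_ge, Rle_0_sqr]).
  rewrite H1. rewrite Rmult_assoc. apply Rmult_le_compat_l; auto.
  replace (l1n l * l1n l * (nrm u * nrm u)) with ((l1n l * nrm u) * (l1n l * nrm u)) by ring.
  apply Rmult_le_compat; auto.
Qed.

Lemma Vq_upper q u : qpos q -> Vq q u <= Mq q * (nrm u * nrm u).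
Proof.
  intros [? [? [? ?]]]. unfold Vq, Mq.
  pose proof (term_sq_le _ (q1 q) u H). pose proof (term_sq_le _ (q2 q) u H0).
  pose proof (term_sq_le _ (q3 q) u H1). pose proof (term_sq_le _ (q4 q) u H2). lra.
Qed.

Lemma term_prod_le w l u v : 0 <= w ->
  Rabs (w * ev l u * ev l v) <= w * (l1n l * l1n l) * (nrm u * nrm v).
Proof.
  intros Hw. pose proof (ev_bound l u). pose proof (ev_bound l v).
  pose proof (Rabs_pos (ev l u)). pose proof (Rabs_pos (ev l v)).
  rewrite !Rabs_mult, (Rabs_right w) by lra.
  rewrite Rmult_assoc.
  replace (w * (l1n l * l1n l) * (nrm u * nrm v)) with (w * ((l1n l * nrm u) * (l1n l * nrm v))) by ring.
  apply Rmult_le_compat_l; auto.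
  apply Rmult_le_compat; auto.
Qed.

Lemma Vdq_bound q u v : qpos q -> Rabs (Vdq q u v) <= 2 * Mq q * (nrm u * nrm v).
Proof.
  intros [? [? [? ?]]]. unfold Vdq, Mq.
  pose proof (term_prod_le _ (q1 q) u v H). pose proof (term_prod_le _ (q2 q) u v H0).
  pose proof (term_prod_le _ (q3 q) u v H1). pose proof (term_prod_le _ (q4 q) u v H2).
  rewrite Rabs_mult, (Rabs_right 2) by lra.
  set (A := w1 q * ev (q1 q) u * ev (q1 q) v) in *.
  set (B := w2 q * ev (q2 q) u * ev (q2 q) v) in *.
  set (C := w3 q * ev (q3 q) u * ev (q3 q) v) in *.
  set (D := w4 q * ev (q4 q) u * ev (q4 q) v) in *.
  pose proof (Rabs_triang (A + B + C) D). pose proof (Rabs_triang (A + B) C). pose proof (Rabs_triang A B).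
  lra.
Qed.

Lemma Vdq_add q u v w : Vdq q u (sadd v w) = Vdq q u v + Vdq q u w.
Proof. unfold Vdq. rewrite !ev_sadd. ring. Qed.

Lemma Vq_deriv P (x : R -> state) S q t :
  derivable_pt_lim (fun u => ra (x u)) t (f_ra P (x t)) ->
  derivable_pt_lim (fun u => rb (x u)) t (f_rb P (x t)) ->
  derivable_pt_lim (fun u => pa (x u)) t (f_pa P (x t)) ->
  derivable_pt_lim (fun u => pb (x u)) t (f_pb P (x t)) ->
  derivable_pt_lim (fun u => Vq q (ssub (x u) S)) t (Vdq q (ssub (x t) S) (Fv P (x t))).
Proof.
  intros H1 H2 H3 H4.
  pose proof (fun l => ev_deriv P x S l t H1 H2 H3 H4) as He.
  unfold Vq.
  eapply dpl_eq.
  { repeat apply dpl_add; apply dpl_cmul; apply dpl_mul; apply He. }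
  unfold Vdq. ring.
Qed.

Lemma sq_lt_aux m n e : 0 < m -> 0 <= n -> 0 < e -> m * (n * n) < m * (e * e) -> n < e.
Proof.
  intros Hm Hn He H. destruct (Rlt_dec n e) as [|Hne]; auto. apply Rnot_lt_le in Hne.
  assert (e * e <= n * n) by (apply Rmult_le_compat; lra).
  assert (m * (e * e) <= m * (n * n)) by (apply Rmult_le_compat_l; lra). lra.
Qed.

Lemma lyap P S q m mu r : qpos q -> 0 < m -> 0 < mu -> 0 < r ->
  (forall u, m * (nrm u * nrm u) <= Vq q u) ->
  (forall x, nrm (ssub x S) < r -> Vdq q (ssub x S) (Fv P x) <= - mu * Vq q (ssub x S)) ->
  locally_asymptotically_stable P S.
Proof.
  intros Hq Hm Hmu Hr Hlow Hdec.
  set (rho := m * (r * r) / 2).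
  assert (Hrho : 0 < rho) by (unfold rho; apply Rmult_lt_0_compat; [apply Rmult_lt_0_compat; nra | lra]).
  assert (KEY : forall x, is_solution P x -> Vq q (ssub (x 0) S) < rho ->
            forall t, 0 <= t -> Vq q (ssub (x t) S) * (1 + mu * t) <= Vq q (ssub (x 0) S)).
  { intros x [a [Ha Hsol]] H0 t Ht.
    set (G := fun t => Vq q (ssub (x t) S) * (1 + mu * t)).
    set (G' := fun t => Vdq q (ssub (x t) S) (Fv P (x t)) * (1 + mu * t) + Vq q (ssub (x t) S) * mu).
    assert (HG0 : G 0 = Vq q (ssub (x 0) S)) by (unfold G; ring).
    rewrite <- HG0. apply (barrier G G' a rho Ha); auto.
    - intros s Hs. destruct (Hsol s Hs) as [D1 [D2 [D3 D4]]].
      assert (Hlin : derivable_pt_lim (fun t => 1 + mu*t) s mu)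
        by (eapply dpl_eq; [apply dpl_add; [apply dpl_const| apply dpl_cmul; apply dpl_id]| ring]).
      pose proof (dpl_mul _ _ s _ _ (Vq_deriv P x S q s D1 D2 D3 D4) Hlin) as HH.
      cbv beta in HH. exact HH.
    - rewrite HG0; auto.
    - intros s Hs HGs. unfold G in HGs. unfold G'.
      pose proof (Vq_ge0 q (ssub (x s) S) Hq) as HV.
      assert (0 <= Vq q (ssub (x s) S) * (mu * s)) by (apply Rmult_le_pos; nra).
      assert (HVr : Vq q (ssub (x s) S) <= rho) by nra.
      assert (Hn : nrm (ssub (x s) S) < r).
      { pose proof (Hlow (ssub (x s) S)). pose proof (nrm_ge0 (ssub (x s) S)).
        unfold rho in HVr. destruct (Rlt_dec (nrm (ssub (x s) S)) r) as [|Hn']; auto.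
        apply Rnot_lt_le in Hn'.
        assert (r * r <= nrm (ssub (x s) S) * nrm (ssub (x s) S)) by (apply Rmult_le_compat; lra).
        assert (m * (r * r) <= m * (nrm (ssub (x s) S) * nrm (ssub (x s) S))) by (apply Rmult_le_compat_l; lra).
        assert (0 < m * (r * r)) by (apply Rmult_lt_0_compat; nra).
        lra. }
      specialize (Hdec (x s) Hn).
      assert (Vdq q (ssub (x s) S) (Fv P (x s)) * (1 + mu * s) <= (- mu * Vq q (ssub (x s) S)) * (1 + mu * s))
        by (apply Rmult_le_compat_r; nra).
      assert (0 <= mu * (Vq q (ssub (x s) S) * (mu * s))) by (apply Rmult_le_pos; lra).
      lra. }
  split.
  - intros eps Heps.
    set (k := Rmin rho (m * (eps * eps)) / (Mq q + 1)).
    pose proof (Mq_ge0 q Hq).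
    assert (Hk : 0 < k) by (unfold k; apply Rdiv_lt_0_compat; [apply Rmin_glb_lt; [lra| apply Rmult_lt_0_compat; [lra| apply Rmult_lt_0_compat; lra]]| lra]).
    exists (Rmin 1 k). split; [apply Rmin_glb_lt; lra|].
    intros x Hx Hd t Ht. rewrite dist4_nrm in *.
    pose proof (nrm_ge0 (ssub (x 0) S)).
    assert (Hd1 : nrm (ssub (x 0) S) < 1) by (eapply Rlt_le_trans; [exact Hd| apply Rmin_l]).
    assert (Hd2 : nrm (ssub (x 0) S) < k) by (eapply Rlt_le_trans; [exact Hd| apply Rmin_r]).
    pose proof (Vq_upper q (ssub (x 0) S) Hq).
    assert (HV0 : Vq q (ssub (x 0) S) < Rmin rho (m * (eps * eps))).
    { assert (nrm (ssub (x 0) S) * nrm (ssub (x 0) S) <= k) by nra.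
      assert (Mq q * (nrm (ssub (x 0) S) * nrm (ssub (x 0) S)) <= Mq q * k) by (apply Rmult_le_compat_l; lra).
      assert (Mq q * k < Rmin rho (m * (eps * eps))).
      { unfold k. assert (0 < Rmin rho (m * (eps * eps))) by (apply Rmin_glb_lt; [lra| apply Rmult_lt_0_compat; [lra| apply Rmult_lt_0_compat; lra]]).
        apply (Rmult_lt_reg_r (Mq q + 1)); [lra|]. field_simplify; [|lra]. nra. }
      lra. }
    assert (HV1 : Vq q (ssub (x 0) S) < rho) by (eapply Rlt_le_trans; [exact HV0|apply Rmin_l]).
    assert (HV2 : Vq q (ssub (x 0) S) < m * (eps * eps)) by (eapply Rlt_le_trans; [exact HV0|apply Rmin_r]).
    specialize (KEY x Hx HV1 t Ht).
    pose proof (Vq_ge0 q (ssub (x t) S) Hq). pose proof (Hlow (ssub (x t) S)).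
    pose proof (nrm_ge0 (ssub (x t) S)).
    assert (0 <= Vq q (ssub (x t) S) * (mu * t)) by (apply Rmult_le_pos; nra).
    assert (Vq q (ssub (x t) S) <= Vq q (ssub (x 0) S)) by lra.
    apply (sq_lt_aux m); auto; lra.
  - set (k := rho / (Mq q + 1)).
    pose proof (Mq_ge0 q Hq).
    assert (Hk : 0 < k) by (unfold k; apply Rdiv_lt_0_compat; lra).
    exists (Rmin 1 k). split; [apply Rmin_glb_lt; lra|].
    intros x Hx Hd e He. rewrite dist4_nrm in *.
    pose proof (nrm_ge0 (ssub (x 0) S)).
    assert (Hd1 : nrm (ssub (x 0) S) < 1) by (eapply Rlt_le_trans; [exact Hd| apply Rmin_l]).
    assert (Hd2 : nrm (ssub (x 0) S) < k) by (eapply Rlt_le_trans; [exact Hd| apply Rmin_r]).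
    pose proof (Vq_upper q (ssub (x 0) S) Hq).
    assert (HV1 : Vq q (ssub (x 0) S) < rho).
    { assert (nrm (ssub (x 0) S) * nrm (ssub (x 0) S) <= k) by nra.
      assert (Mq q * (nrm (ssub (x 0) S) * nrm (ssub (x 0) S)) <= Mq q * k) by (apply Rmult_le_compat_l; lra).
      assert (Mq q * k < rho).
      { unfold k. apply (Rmult_lt_reg_r (Mq q + 1)); [lra|]. field_simplify; [|lra]. nra. }
      lra. }
    set (V0 := Vq q (ssub (x 0) S)) in *.
    pose proof (Vq_ge0 q (ssub (x 0) S) Hq).
    exists (V0 / (mu * m * (e * e))).
    intros t Ht.
    assert (HT0 : 0 <= V0 / (mu * m * (e * e))) by (unfold Rdiv; apply Rmult_le_pos; [exact H2| apply Rlt_le, Rinv_0_lt_compat; apply Rmult_lt_0_compat; [apply Rmult_lt_0_compat; lra| apply Rmult_lt_0_compat; lra]]).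
    specialize (KEY x Hx HV1 t ltac:(lra)).
    pose proof (Hlow (ssub (x t) S)). pose proof (nrm_ge0 (ssub (x t) S)).
    pose proof (Vq_ge0 q (ssub (x t) S) Hq).
    assert (Hmt : V0 <= mu * m * (e * e) * t).
    { assert (V0 = mu * m * (e * e) * (V0 / (mu * m * (e * e)))) by (field; repeat split; apply Rgt_not_eq; lra).
      rewrite H6 at 1. apply Rmult_le_compat_l; [|lra].
      apply Rlt_le, Rmult_lt_0_compat; [apply Rmult_lt_0_compat; lra| apply Rmult_lt_0_compat; lra]. }
    set (n := nrm (ssub (x t) S)) in *.
    destruct (Rlt_dec n e) as [|Hne]; auto. apply Rnot_lt_le in Hne. exfalso.
    assert (e * e <= n * n) by (apply Rmult_le_compat; lra).
    assert (m * (e * e) <= m * (n * n)) by (apply Rmult_le_compat_l; lra).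
    assert (0 < m * (e * e)) by (apply Rmult_lt_0_compat; [lra| apply Rmult_lt_0_compat; lra]).
    assert (m * (e * e) * (1 + mu * t) <= Vq q (ssub (x t) S) * (1 + mu * t)) by (apply Rmult_le_compat_r; nra).
    assert (m * (e * e) * (1 + mu * t) = m * (e * e) + mu * m * (e * e) * t) by ring.
    change (Vq q (ssub (x 0) S)) with V0 in KEY. lra.
Qed.

Lemma step_bound c v e M E : Rabs (c * v + e) <= M -> Rabs e <= E -> c <> 0 ->
  Rabs v <= (M + E) / Rabs c.
Proof.
  intros H1 H2 Hc.
  assert (Hc' : 0 < Rabs c) by (apply Rabs_pos_lt; auto).
  assert (Rabs (c * v) <= M + E).
  { replace (c * v) with ((c * v + e) - e) by ring.
    eapply Rle_trans; [apply Rabs_triang|]. rewrite Rabs_Ropp. lra. }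
  rewrite Rabs_mult in H.
  apply (Rmult_le_reg_l (Rabs c)); auto.
  replace (Rabs c * ((M + E) / Rabs c)) with (M + E) by (field; lra). lra.
Qed.

Lemma tri_bound (l1 l2 l3 l4 : state) :
  ra l1 = 0 -> rb l1 = 0 -> pa l1 = 0 -> pb l1 <> 0 ->
  ra l2 = 0 -> pa l2 = 0 -> rb l2 <> 0 ->
  ra l3 = 0 -> pa l3 <> 0 -> ra l4 <> 0 ->
  exists K, 0 < K /\ forall u M,
    Rabs (ev l1 u) <= M -> Rabs (ev l2 u) <= M -> Rabs (ev l3 u) <= M -> Rabs (ev l4 u) <= M ->
    nrm u <= K * M.
Proof.
  intros A1 B1 C1 D1 A2 C2 B2 A3 C3 A4.
  set (K1 := 1 / Rabs (pb l1)).
  set (K2 := (1 + Rabs (pb l2) * K1) / Rabs (rb l2)).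
  set (K3 := (1 + Rabs (rb l3) * K2 + Rabs (pb l3) * K1) / Rabs (pa l3)).
  set (K4 := (1 + Rabs (rb l4) * K2 + Rabs (pa l4) * K3 + Rabs (pb l4) * K1) / Rabs (ra l4)).
  pose proof (Rabs_pos_lt _ D1). pose proof (Rabs_pos_lt _ B2). pose proof (Rabs_pos_lt _ C3). pose proof (Rabs_pos_lt _ A4).
  pose proof (Rabs_pos (pb l2)). pose proof (Rabs_pos (rb l3)). pose proof (Rabs_pos (pb l3)).
  pose proof (Rabs_pos (rb l4)). pose proof (Rabs_pos (pa l4)). pose proof (Rabs_pos (pb l4)).
  assert (HK1 : 0 < K1) by (unfold K1; apply Rdiv_lt_0_compat; lra).
  assert (HK2 : 0 < K2) by (unfold K2; apply Rdiv_lt_0_compat; [nra|lra]).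
  assert (HK3 : 0 < K3) by (unfold K3; apply Rdiv_lt_0_compat; [nra|lra]).
  assert (HK4 : 0 < K4) by (unfold K4; apply Rdiv_lt_0_compat; [nra|lra]).
  exists (K1 + K2 + K3 + K4). split; [lra|].
  intros u M E1 E2 E3 E4.
  assert (HM : 0 <= M) by (eapply Rle_trans; [apply Rabs_pos| exact E1]).
  unfold ev in E1, E2, E3, E4. rewrite A1, B1, C1 in E1. rewrite A2, C2 in E2. rewrite A3 in E3.
  assert (U1 : Rabs (pb u) <= K1 * M).
  { replace (K1 * M) with ((M + 0) / Rabs (pb l1)) by (unfold K1; field; lra).
    apply (step_bound _ _ 0); [ | rewrite Rabs_R0; lra | auto].
    replace (pb l1 * pb u + 0) with (0 * ra u + 0 * rb u + 0 * pa u + pb l1 * pb u) by ring. auto. }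
  assert (U2 : Rabs (rb u) <= K2 * M).
  { replace (K2 * M) with ((M + Rabs (pb l2) * (K1 * M)) / Rabs (rb l2)) by (unfold K2; field; lra).
    apply (step_bound _ _ (pb l2 * pb u)); [ | | auto].
    - replace (rb l2 * rb u + pb l2 * pb u) with (0 * ra u + rb l2 * rb u + 0 * pa u + pb l2 * pb u) by ring. auto.
    - rewrite Rabs_mult. apply Rmult_le_compat_l; auto. }
  assert (U3 : Rabs (pa u) <= K3 * M).
  { replace (K3 * M) with ((M + (Rabs (rb l3) * (K2 * M) + Rabs (pb l3) * (K1 * M))) / Rabs (pa l3)) by (unfold K3; field; lra).
    apply (step_bound _ _ (rb l3 * rb u + pb l3 * pb u)); [ | | auto].
    - replace (pa l3 * pa u + (rb l3 * rb u + pb l3 * pb u)) with (0 * ra u + rb l3 * rb u + pa l3 * pa u + pb l3 * pb u) by ring. auto.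
    - eapply Rle_trans; [apply Rabs_triang|]. rewrite !Rabs_mult.
      apply Rplus_le_compat; apply Rmult_le_compat_l; auto. }
  assert (U4 : Rabs (ra u) <= K4 * M).
  { replace (K4 * M) with ((M + (Rabs (rb l4) * (K2 * M) + Rabs (pa l4) * (K3 * M) + Rabs (pb l4) * (K1 * M))) / Rabs (ra l4)) by (unfold K4; field; lra).
    apply (step_bound _ _ (rb l4 * rb u + pa l4 * pa u + pb l4 * pb u)); [ | | auto].
    - replace (ra l4 * ra u + (rb l4 * rb u + pa l4 * pa u + pb l4 * pb u)) with (ra l4 * ra u + rb l4 * rb u + pa l4 * pa u + pb l4 * pb u) by ring. auto.
    - eapply Rle_trans; [apply Rabs_triang|]. rewrite !Rabs_mult.
      eapply Rle_trans; [apply Rplus_le_compat_r, Rabs_triang|]. rewrite !Rabs_mult.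
      assert (Rabs (rb l4) * Rabs (rb u) <= Rabs (rb l4) * (K2 * M)) by (apply Rmult_le_compat_l; auto).
      assert (Rabs (pa l4) * Rabs (pa u) <= Rabs (pa l4) * (K3 * M)) by (apply Rmult_le_compat_l; auto).
      assert (Rabs (pb l4) * Rabs (pb u) <= Rabs (pb l4) * (K1 * M)) by (apply Rmult_le_compat_l; auto).
      lra. }
  assert (K1 * M <= (K1 + K2 + K3 + K4) * M) by (apply Rmult_le_compat_r; lra).
  assert (K2 * M <= (K1 + K2 + K3 + K4) * M) by (apply Rmult_le_compat_r; lra).
  assert (K3 * M <= (K1 + K2 + K3 + K4) * M) by (apply Rmult_le_compat_r; lra).
  assert (K4 * M <= (K1 + K2 + K3 + K4) * M) by (apply Rmult_le_compat_r; lra).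
  apply nrm_le; lra.
Qed.

Lemma sq_abs x : Rabs x * Rabs x = x * x.
Proof. rewrite <- Rabs_mult. apply Rabs_right. apply Rle_ge. apply Rle_0_sqr. Qed.
Lemma sum4_sq a b c d : (a + b + c + d) * (a + b + c + d) <= 4 * (a * a + b * b + c * c + d * d).
Proof.
  assert (4 * (a * a + b * b + c * c + d * d) - (a + b + c + d) * (a + b + c + d) =
    (a-b)*(a-b) + (a-c)*(a-c) + (a-d)*(a-d) + (b-c)*(b-c) + (b-d)*(b-d) + (c-d)*(c-d)) by ring.
  pose proof (Rle_0_sqr (a-b)); pose proof (Rle_0_sqr (a-c)); pose proof (Rle_0_sqr (a-d));
  pose proof (Rle_0_sqr (b-c)); pose proof (Rle_0_sqr (b-d)); pose proof (Rle_0_sqr (c-d)).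
  unfold Rsqr in *. lra.
Qed.

Lemma quad_lower q : 0 < w1 q -> 0 < w2 q -> 0 < w3 q -> 0 < w4 q ->
  ra (q1 q) = 0 -> rb (q1 q) = 0 -> pa (q1 q) = 0 -> pb (q1 q) <> 0 ->
  ra (q2 q) = 0 -> pa (q2 q) = 0 -> rb (q2 q) <> 0 ->
  ra (q3 q) = 0 -> pa (q3 q) <> 0 -> ra (q4 q) <> 0 ->
  exists m, 0 < m /\ forall u, m * (nrm u * nrm u) <= Vq q u.
Proof.
  intros W1 W2 W3 W4 A1 B1 C1 D1 A2 C2 B2 A3 C3 A4.
  destruct (tri_bound _ _ _ _ A1 B1 C1 D1 A2 C2 B2 A3 C3 A4) as [K [HK HB]].
  set (iw := / w1 q + / w2 q + / w3 q + / w4 q).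
  assert (Hiw : 0 < iw) by (unfold iw; pose proof (Rinv_0_lt_compat _ W1); pose proof (Rinv_0_lt_compat _ W2);
    pose proof (Rinv_0_lt_compat _ W3); pose proof (Rinv_0_lt_compat _ W4); lra).
  exists (/ (4 * (K * K) * iw)). split.
  { apply Rinv_0_lt_compat. apply Rmult_lt_0_compat; [nra| lra]. }
  intros u.
  set (e1 := ev (q1 q) u). set (e2 := ev (q2 q) u). set (e3 := ev (q3 q) u). set (e4 := ev (q4 q) u).
  set (M := Rabs e1 + Rabs e2 + Rabs e3 + Rabs e4).
  pose proof (Rabs_pos e1). pose proof (Rabs_pos e2). pose proof (Rabs_pos e3). pose proof (Rabs_pos e4).
  assert (Hn : nrm u <= K * M) by (apply HB; unfold M; fold e1 e2 e3 e4; lra).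
  pose proof (nrm_ge0 u).
  assert (Hn2 : nrm u * nrm u <= (K * K) * (M * M)) by nra.
  assert (HM2 : M * M <= 4 * (e1 * e1 + e2 * e2 + e3 * e3 + e4 * e4)).
  { unfold M. rewrite <- (sq_abs e1), <- (sq_abs e2), <- (sq_abs e3), <- (sq_abs e4). apply sum4_sq. }
  pose proof (Vq_ge0 q u ltac:(unfold qpos; lra)) as HV0.
  assert (HV : e1 * e1 + e2 * e2 + e3 * e3 + e4 * e4 <= iw * Vq q u).
  { assert (T1 : w1 q * (e1 * e1) <= Vq q u).
    { unfold Vq; fold e1 e2 e3 e4. pose proof (Rle_0_sqr e2); pose proof (Rle_0_sqr e3); pose proof (Rle_0_sqr e4). unfold Rsqr in *.
      assert (0 <= w2 q * (e2 * e2)) by (apply Rmult_le_pos; lra).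
      assert (0 <= w3 q * (e3 * e3)) by (apply Rmult_le_pos; lra).
      assert (0 <= w4 q * (e4 * e4)) by (apply Rmult_le_pos; lra). lra. }
    assert (T2 : w2 q * (e2 * e2) <= Vq q u).
    { unfold Vq; fold e1 e2 e3 e4. pose proof (Rle_0_sqr e1); pose proof (Rle_0_sqr e3); pose proof (Rle_0_sqr e4). unfold Rsqr in *.
      assert (0 <= w1 q * (e1 * e1)) by (apply Rmult_le_pos; lra).
      assert (0 <= w3 q * (e3 * e3)) by (apply Rmult_le_pos; lra).
      assert (0 <= w4 q * (e4 * e4)) by (apply Rmult_le_pos; lra). lra. }
    assert (T3 : w3 q * (e3 * e3) <= Vq q u).
    { unfold Vq; fold e1 e2 e3 e4. pose proof (Rle_0_sqr e1); pose proof (Rle_0_sqr e2); pose proof (Rle_0_sqr e4). unfold Rsqr in *.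
      assert (0 <= w1 q * (e1 * e1)) by (apply Rmult_le_pos; lra).
      assert (0 <= w2 q * (e2 * e2)) by (apply Rmult_le_pos; lra).
      assert (0 <= w4 q * (e4 * e4)) by (apply Rmult_le_pos; lra). lra. }
    assert (T4 : w4 q * (e4 * e4) <= Vq q u).
    { unfold Vq; fold e1 e2 e3 e4. pose proof (Rle_0_sqr e1); pose proof (Rle_0_sqr e2); pose proof (Rle_0_sqr e3). unfold Rsqr in *.
      assert (0 <= w1 q * (e1 * e1)) by (apply Rmult_le_pos; lra).
      assert (0 <= w2 q * (e2 * e2)) by (apply Rmult_le_pos; lra).
      assert (0 <= w3 q * (e3 * e3)) by (apply Rmult_le_pos; lra). lra. }
    assert (Hdiv : forall w e, 0 < w -> w * (e * e) <= Vq q u -> e * e <= / w * Vq q u).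
    { intros w e Hw Hle. apply (Rmult_le_reg_l w); auto.
      replace (w * (/ w * Vq q u)) with (Vq q u) by (field; lra). lra. }
    pose proof (Hdiv _ _ W1 T1). pose proof (Hdiv _ _ W2 T2). pose proof (Hdiv _ _ W3 T3). pose proof (Hdiv _ _ W4 T4).
    unfold iw. lra. }
  apply (Rmult_le_reg_l (4 * (K * K) * iw)); [apply Rmult_lt_0_compat; [nra| lra]|].
  rewrite <- Rmult_assoc, Rinv_r by (apply Rgt_not_eq, Rmult_lt_0_compat; [nra| lra]).
  assert (0 <= K * K) by nra.
  assert ((K * K) * (M * M) <= (K * K) * (4 * (iw * Vq q u))) by (apply Rmult_le_compat_l; lra).
  lra.
Qed.

Record lin := mkLin { gA : R; gB : R; dA : R; dB : R; kA : R; kB : R; jX : R; jY : R; jZ : R }.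

Definition compA (L : lin) (mu : R) (l : state) : state :=
 mkState (- gA L * ra l + kA L * pa l + mu * ra l)
         (- gB L * rb l + kB L * pb l + mu * rb l)
         (jX L * ra l + jZ L * rb l - dA L * pa l + mu * pa l)
         (jY L * ra l - dB L * pb l + mu * pb l).
Definition Jv (L : lin) (u : state) : state :=
  mkState (- gA L * ra u + jX L * pa u + jY L * pb u) (- gB L * rb u + jZ L * pa u)
          (kA L * ra u - dA L * pa u) (kB L * rb u - dB L * pb u).

Lemma ev_compA L mu l u : ev (compA L mu l) u = ev l (Jv L u) + mu * ev l u.
Proof. destruct l, u; unfold ev, compA, Jv; simpl; ring. Qed.

Lemma ev_compA_lin L mu a c b u :
  ev (compA L mu (sadd a (sscale c b))) u = ev (compA L mu a) u + c * ev (compA L mu b) u.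
Proof. destruct a, b, u; unfold ev, compA, sadd, sscale; simpl; ring. Qed.

Lemma ev_sadd_sscale a c b u : ev (sadd a (sscale c b)) u = ev a u + c * ev b u.
Proof. destruct a, b, u; unfold ev, sadd, sscale; simpl; ring. Qed.

Definition a1 L := gA L + gB L + dA L + dB L.
Definition a2 L := gA L * gB L + (gA L + gB L) * (dA L + dB L) + dA L * dB L - kA L * jX L.
Definition a3 L := dA L * dB L * (gA L + gB L) + (dA L + dB L) * gA L * gB L - kA L * (dB L + gB L) * jX L.
Definition a4 L := gA L * gB L * dA L * dB L - kA L * kB L * jY L * jZ L - kA L * gB L * dB L * jX L.
Definition c1 L mu := a1 L - 4 * mu.
Definition c2 L mu := a2 L - 3 * a1 L * mu + 6 * mu ^ 2.
Definition c3 L mu := a3 L - 2 * a2 L * mu + 3 * a1 L * mu ^ 2 - 4 * mu ^ 3.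
Definition c4 L mu := a4 L - a3 L * mu + a2 L * mu ^ 2 - a1 L * mu ^ 3 + mu ^ 4.
Definition DD L mu := c1 L mu * c2 L mu - c3 L mu.
Definition b2 L mu := DD L mu / c1 L mu.
Definition b4 L mu := c1 L mu * c4 L mu / DD L mu.
Definition b3 L mu := (c3 L mu * DD L mu - c1 L mu ^ 2 * c4 L mu) / (c1 L mu * DD L mu).

Definition LL1 : state := mkState 0 0 0 1.
Definition LL2 L mu := compA L mu LL1.
Definition LL3 L mu := compA L mu (LL2 L mu).
Definition LL4 L mu := compA L mu (LL3 L mu).
Definition SS3 L mu := sadd (LL3 L mu) (sscale (b4 L mu) LL1).
Definition SS4 L mu := sadd (LL4 L mu) (sscale (b3 L mu + b4 L mu) (LL2 L mu)).
Definition quadL L mu : quad :=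
  mkQ (b2 L mu * b3 L mu * b4 L mu) (b2 L mu * b3 L mu) (b2 L mu) 1
      LL1 (LL2 L mu) (SS3 L mu) (SS4 L mu).

Lemma CH L mu u : ev (compA L mu (LL4 L mu)) u =
  -(c1 L mu * ev (LL4 L mu) u + c2 L mu * ev (LL3 L mu) u + c3 L mu * ev (LL2 L mu) u + c4 L mu * ev LL1 u).
Proof.
  destruct L, u. unfold LL4, LL3, LL2, LL1, compA, ev, c1, c2, c3, c4, a1, a2, a3, a4; simpl. ring.
Qed.

Lemma schwarz x1 x2 x3 x4 y1 y2 y3 y4 :
  x1 <> 0 -> x1*x2 - x3 <> 0 ->
  ((x1*x2 - x3)/x1)*((x3*(x1*x2 - x3) - x1^2*x4)/(x1*(x1*x2 - x3)))*(x1*x4/(x1*x2 - x3)) * y1 * y2 + ((x1*x2 - x3)/x1)*((x3*(x1*x2 - x3) - x1^2*x4)/(x1*(x1*x2 - x3))) * y2 * y3 + ((x1*x2 - x3)/x1) * (y3 + (x1*x4/(x1*x2 - x3))*y1) * (y4 + (x1*x4/(x1*x2 - x3))*y2)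
   + 1 * (y4 + (((x3*(x1*x2 - x3) - x1^2*x4)/(x1*(x1*x2 - x3)))+(x1*x4/(x1*x2 - x3)))*y2) * ((-(x1*y4+x2*y3+x3*y2+x4*y1)) + (((x3*(x1*x2 - x3) - x1^2*x4)/(x1*(x1*x2 - x3)))+(x1*x4/(x1*x2 - x3)))*y3) = - x1 * (y4 + (((x3*(x1*x2 - x3) - x1^2*x4)/(x1*(x1*x2 - x3)))+(x1*x4/(x1*x2 - x3)))*y2)^2.
Proof. intros. field. auto. Qed.

Lemma lin_ident L mu u : c1 L mu <> 0 -> DD L mu <> 0 ->
  Vdq (quadL L mu) u (Jv L u) =
  - 2 * c1 L mu * (ev (SS4 L mu) u) ^ 2 - 2 * mu * Vq (quadL L mu) u.
Proof.
  intros H1 H2.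
  assert (E : forall l, ev l (Jv L u) = ev (compA L mu l) u - mu * ev l u)
    by (intros; rewrite ev_compA; ring).
  unfold Vdq, Vq, quadL; simpl. rewrite !E.
  unfold SS3, SS4. rewrite !ev_compA_lin, !ev_sadd_sscale.
  change (compA L mu LL1) with (LL2 L mu).
  change (compA L mu (LL2 L mu)) with (LL3 L mu).
  change (compA L mu (LL3 L mu)) with (LL4 L mu).
  rewrite CH.
  pose proof (schwarz (c1 L mu) (c2 L mu) (c3 L mu) (c4 L mu) (ev LL1 u) (ev (LL2 L mu) u)
     (ev (LL3 L mu) u) (ev (LL4 L mu) u) H1 H2) as HS.
  unfold b2, b3, b4, DD in *.
  set (y1 := ev LL1 u) in *. set (y2 := ev (LL2 L mu) u) in *.
  set (y3 := ev (LL3 L mu) u) in *. set (y4 := ev (LL4 L mu) u) in *.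
  set (C1 := c1 L mu) in *. set (C2 := c2 L mu) in *. set (C3 := c3 L mu) in *. set (C4 := c4 L mu) in *.
  set (B2 := (C1 * C2 - C3) / C1) in *.
  set (B4 := C1 * C4 / (C1 * C2 - C3)) in *.
  set (B3 := (C3 * (C1 * C2 - C3) - C1 ^ 2 * C4) / (C1 * (C1 * C2 - C3))) in *.
  set (Y5 := - (C1 * y4 + C2 * y3 + C3 * y2 + C4 * y1)) in *.
  lra.
Qed.

Lemma quadL_lower L mu : kA L <> 0 -> kB L <> 0 -> jZ L <> 0 ->
  0 < b2 L mu -> 0 < b3 L mu -> 0 < b4 L mu ->
  exists m, 0 < m /\ forall u, m * (nrm u * nrm u) <= Vq (quadL L mu) u.
Proof.
  intros HA HB HZ P2 P3 P4.
  apply quad_lower; cbn [w1 w2 w3 w4 q1 q2 q3 q4 quadL].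
  - apply Rmult_lt_0_compat; [apply Rmult_lt_0_compat|]; auto.
  - apply Rmult_lt_0_compat; auto.
  - auto.
  - lra.
  - reflexivity.
  - reflexivity.
  - reflexivity.
  - unfold LL1; simpl; lra.
  - unfold LL2, LL1, compA; simpl; ring.
  - unfold LL2, LL1, compA; simpl; ring.
  - replace (rb (LL2 L mu)) with (kB L) by (unfold LL2, LL1, compA; simpl; ring). auto.
  - unfold SS3, LL3, LL2, LL1, compA, sadd, sscale; simpl; ring.
  - replace (pa (SS3 L mu)) with (jZ L * kB L) by (unfold SS3, LL3, LL2, LL1, compA, sadd, sscale; simpl; ring).
    apply Rmult_integral_contrapositive; auto.
  - replace (ra (SS4 L mu)) with (kA L * (jZ L * kB L)) by (unfold SS4, LL4, LL3, LL2, LL1, compA, sadd, sscale; simpl; ring).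
    apply Rmult_integral_contrapositive; split; [auto| apply Rmult_integral_contrapositive; auto].
Qed.

Lemma weights_pos L mu : 0 < c1 L mu -> 0 < c3 L mu -> 0 < c4 L mu ->
  0 < c1 L mu * c2 L mu * c3 L mu - c1 L mu ^ 2 * c4 L mu - c3 L mu ^ 2 ->
  0 < DD L mu /\ 0 < b2 L mu /\ 0 < b3 L mu /\ 0 < b4 L mu.
Proof.
  intros H1 H3 H4 HD.
  unfold b2, b3, b4, DD.
  set (C1 := c1 L mu) in *. set (C2 := c2 L mu) in *. set (C3 := c3 L mu) in *. set (C4 := c4 L mu) in *.
  assert (HDD : 0 < C1 * C2 - C3).
  { assert (0 < C1 ^ 2 * C4) by (apply Rmult_lt_0_compat; [apply pow_lt|]; auto).
    assert (C3 * C3 < C3 * (C1 * C2)) by nra.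
    apply Rmult_lt_reg_l in H0; auto. lra. }
  split; [auto|]. split; [apply Rdiv_lt_0_compat; auto|]. split.
  - apply Rdiv_lt_0_compat; [nra| apply Rmult_lt_0_compat; auto].
  - apply Rdiv_lt_0_compat; [apply Rmult_lt_0_compat|]; auto.
Qed.

Lemma pos_near0 (f : R -> R) : continuity_pt f 0 -> 0 < f 0 ->
  exists d, 0 < d /\ forall mu, 0 <= mu < d -> 0 < f mu.
Proof.
  intros Hc Hf. destruct (cont_extract f 0 Hc (f 0) Hf) as [d [Hd H]].
  exists d; split; auto. intros mu Hmu.
  assert (Rabs (mu - 0) < d) by (rewrite Rminus_0_r, Rabs_right; lra).
  specialize (H mu H0). apply Rabs_def2 in H. lra.
Qed.

Lemma small_mu L : 0 < a1 L -> 0 < a3 L -> 0 < a4 L ->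
  0 < a1 L * a2 L * a3 L - a1 L ^ 2 * a4 L - a3 L ^ 2 ->
  exists mu, 0 < mu /\ 0 < c1 L mu /\ 0 < c3 L mu /\ 0 < c4 L mu /\
    0 < c1 L mu * c2 L mu * c3 L mu - c1 L mu ^ 2 * c4 L mu - c3 L mu ^ 2.
Proof.
  intros H1 H3 H4 HD.
  destruct (pos_near0 (fun mu => c1 L mu)) as [d1 [Hd1 P1]].
  { unfold c1. reg. } { unfold c1. lra. }
  destruct (pos_near0 (fun mu => c3 L mu)) as [d3 [Hd3 P3]].
  { unfold c3. reg. } { unfold c3. lra. }
  destruct (pos_near0 (fun mu => c4 L mu)) as [d4 [Hd4 P4]].
  { unfold c4. reg. } { unfold c4. lra. }
  destruct (pos_near0 (fun mu => c1 L mu * c2 L mu * c3 L mu - c1 L mu ^ 2 * c4 L mu - c3 L mu ^ 2)) as [d5 [Hd5 P5]].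
  { unfold c1, c2, c3, c4. reg. }
  { unfold c1, c2, c3, c4. replace (a1 L - 4 * 0) with (a1 L) by ring.
    replace (a2 L - 3 * a1 L * 0 + 6 * 0 ^ 2) with (a2 L) by ring.
    replace (a3 L - 2 * a2 L * 0 + 3 * a1 L * 0 ^ 2 - 4 * 0 ^ 3) with (a3 L) by ring.
    replace (a4 L - a3 L * 0 + a2 L * 0 ^ 2 - a1 L * 0 ^ 3 + 0 ^ 4) with (a4 L) by ring. lra. }
  set (mu := Rmin (Rmin d1 d3) (Rmin d4 d5) / 2).
  assert (Hm : 0 < Rmin (Rmin d1 d3) (Rmin d4 d5)) by (repeat apply Rmin_glb_lt; auto).
  assert (Hm1 : Rmin (Rmin d1 d3) (Rmin d4 d5) <= d1) by (eapply Rle_trans; [apply Rmin_l| apply Rmin_l]).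
  assert (Hm3 : Rmin (Rmin d1 d3) (Rmin d4 d5) <= d3) by (eapply Rle_trans; [apply Rmin_l| apply Rmin_r]).
  assert (Hm4 : Rmin (Rmin d1 d3) (Rmin d4 d5) <= d4) by (eapply Rle_trans; [apply Rmin_r| apply Rmin_l]).
  assert (Hm5 : Rmin (Rmin d1 d3) (Rmin d4 d5) <= d5) by (eapply Rle_trans; [apply Rmin_r| apply Rmin_r]).
  exists mu. unfold mu.
  repeat split; [lra| apply P1| apply P3| apply P4| apply P5]; lra.
Qed.

Module HillD.
Import Coquelicot.Coquelicot.

Definition H1 (th : R) (n : nat) (p : R) : R := (p / th) ^ n / (1 + (p / th) ^ n).
Definition H2 (th : R) (n : nat) (p : R) : R := 1 / (1 + (p / th) ^ n).
Definition dH (th : R) (n : nat) (p : R) : R := INR n * th ^ n * p ^ (n - 1) / (th ^ n + p ^ n) ^ 2.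

Lemma H1_deriv th n p : 0 < th -> 0 < p -> (0 < n)%nat ->
  derivable_pt_lim (H1 th n) p (dH th n p).
Proof.
  intros Hth Hp Hn. apply is_derive_Reals. unfold H1, dH.
  assert (Hq : 0 < (p / th) ^ n) by (apply pow_lt; apply Rdiv_lt_0_compat; auto).
  auto_derive.
  - lra.
  - destruct n as [|k]; [lia|]. simpl pred. replace (S k - 1)%nat with k by lia.
    unfold Rdiv. rewrite !Rpow_mult_distr, !pow_inv. simpl.
    assert (0 < th ^ k) by (apply pow_lt; auto). assert (0 < p ^ k) by (apply pow_lt; auto).
    field. repeat split; apply Rgt_not_eq; nra.
Qed.

Lemma H2_deriv th n p : 0 < th -> 0 < p -> (0 < n)%nat ->
  derivable_pt_lim (H2 th n) p (- dH th n p).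
Proof.
  intros Hth Hp Hn. apply is_derive_Reals. unfold H2, dH.
  assert (Hq : 0 < (p / th) ^ n) by (apply pow_lt; apply Rdiv_lt_0_compat; auto).
  auto_derive.
  - lra.
  - destruct n as [|k]; [lia|]. simpl pred. replace (S k - 1)%nat with k by lia.
    unfold Rdiv. rewrite !Rpow_mult_distr, !pow_inv. simpl.
    assert (0 < th ^ k) by (apply pow_lt; auto). assert (0 < p ^ k) by (apply pow_lt; auto).
    field. repeat split; apply Rgt_not_eq; nra.
Qed.

Lemma lin_approx f x l : derivable_pt_lim f x l -> forall eta, 0 < eta ->
  exists r, 0 < r /\ forall y, Rabs (y - x) < r -> Rabs (f y - f x - l * (y - x)) <= eta * Rabs (y - x).
Proof.
  intros H eta He. destruct (H eta He) as [d Hd].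
  exists d. split; [apply cond_pos|]. intros y Hy.
  destruct (Req_dec y x) as [->|Hne].
  - replace (f x - f x - l * (x - x)) with 0 by ring. rewrite Rminus_diag, !Rabs_R0. lra.
  - assert (Hh : y - x <> 0) by lra.
    specialize (Hd (y - x) Hh Hy). replace (x + (y - x)) with y in Hd by ring.
    replace (f y - f x - l * (y - x)) with ((y - x) * ((f y - f x) / (y - x) - l)) by (field; auto).
    rewrite Rabs_mult. rewrite Rmult_comm. apply Rmult_le_compat_r; [apply Rabs_pos| lra].
Qed.

End HillD.
Import HillD.

Definition linP (P : params) (S : state) : lin :=
  mkLin (gamma_a P) (gamma_b P) (delta_a P) (delta_b P) (k_a P) (k_b P)
        (Xq P (pa S)) (Yq P (pb S)) (Zq P (pa S)).

Definition gP (P : params) (S x : state) : state :=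
  mkState (m_a P * (H1 (theta_aa P) (n_aa P) (pa x) - H1 (theta_aa P) (n_aa P) (pa S)
                    - dH (theta_aa P) (n_aa P) (pa S) * (pa x - pa S))
           + m_a P * (H2 (theta_b P) (n_b P) (pb x) - H2 (theta_b P) (n_b P) (pb S)
                    - (- dH (theta_b P) (n_b P) (pb S)) * (pb x - pb S)))
          (m_b P * (H2 (theta_a P) (n_a P) (pa x) - H2 (theta_a P) (n_a P) (pa S)
                    - (- dH (theta_a P) (n_a P) (pa S)) * (pa x - pa S)))
          0 0.

Lemma Fv_decomp P S x : steady_state P S ->
  Fv P x = sadd (Jv (linP P S) (ssub x S)) (gP P S x).
Proof.
  intros [E1 [E2 [E3 E4]]].
  assert (HX : Xq P (pa S) = m_a P * dH (theta_aa P) (n_aa P) (pa S)) by (unfold Xq, dH, Rdiv; ring).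
  assert (HY : Yq P (pb S) = m_a P * - dH (theta_b P) (n_b P) (pb S)) by (unfold Yq, dH, Rdiv; ring).
  assert (HZ : Zq P (pa S) = m_b P * - dH (theta_a P) (n_a P) (pa S))
    by (unfold Zq, dH; rewrite (Rplus_comm (pa S ^ n_a P)); unfold Rdiv; ring).
  unfold Fv, Jv, sadd, ssub, gP, linP; simpl. rewrite HX, HY, HZ.
  f_equal.
  - replace (f_ra P x) with (f_ra P x - f_ra P S) by (rewrite E1; ring). unfold f_ra, H1, H2. ring.
  - replace (f_rb P x) with (f_rb P x - f_rb P S) by (rewrite E2; ring). unfold f_rb, H2, Rdiv. ring.
  - replace (f_pa P x) with (f_pa P x - f_pa P S) by (rewrite E3; ring). unfold f_pa. ring.
  - replace (f_pb P x) with (f_pb P x - f_pb P S) by (rewrite E4; ring). unfold f_pb. ring.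
Qed.

Lemma abs_mul_le c a b : 0 <= c -> Rabs a <= b -> Rabs (c * a) <= c * b.
Proof. intros. rewrite Rabs_mult, Rabs_right by lra. apply Rmult_le_compat_l; auto. Qed.

Lemma g_small P S : 0 < m_a P -> 0 < m_b P -> 0 < theta_a P -> 0 < theta_b P -> 0 < theta_aa P ->
  (0 < n_a P)%nat -> (0 < n_b P)%nat -> (0 < n_aa P)%nat -> 0 < pa S -> 0 < pb S ->
  forall eta, 0 < eta -> exists r, 0 < r /\ forall x, nrm (ssub x S) < r ->
    nrm (gP P S x) <= eta * nrm (ssub x S).
Proof.
  intros Hma Hmb Hta Htb Htaa Hna Hnb Hnaa Hpa Hpb eta He.
  destruct (lin_approx _ _ _ (H1_deriv _ _ _ Htaa Hpa Hnaa) (eta / (2 * m_a P))) as [r1 [Hr1 A1]].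
  { apply Rdiv_lt_0_compat; lra. }
  destruct (lin_approx _ _ _ (H2_deriv _ _ _ Htb Hpb Hnb) (eta / (2 * m_a P))) as [r2 [Hr2 A2]].
  { apply Rdiv_lt_0_compat; lra. }
  destruct (lin_approx _ _ _ (H2_deriv _ _ _ Hta Hpa Hna) (eta / m_b P)) as [r3 [Hr3 A3]].
  { apply Rdiv_lt_0_compat; lra. }
  exists (Rmin r1 (Rmin r2 r3)). split; [repeat apply Rmin_glb_lt; auto|].
  intros x Hx.
  set (N := nrm (ssub x S)) in *.
  pose proof (nrm_pa (ssub x S)) as Na. pose proof (nrm_pb (ssub x S)) as Nb. simpl in Na, Nb. fold N in Na, Nb.
  assert (Hm1 : Rmin r1 (Rmin r2 r3) <= r1) by apply Rmin_l.
  assert (Hm2 : Rmin r1 (Rmin r2 r3) <= r2) by (eapply Rle_trans; [apply Rmin_r| apply Rmin_l]).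
  assert (Hm3 : Rmin r1 (Rmin r2 r3) <= r3) by (eapply Rle_trans; [apply Rmin_r| apply Rmin_r]).
  specialize (A1 (pa x) ltac:(lra)). specialize (A2 (pb x) ltac:(lra)). specialize (A3 (pa x) ltac:(lra)).
  assert (HN : 0 <= N) by apply nrm_ge0.
  assert (B1 : eta / (2 * m_a P) * Rabs (pa x - pa S) <= eta / (2 * m_a P) * N)
    by (apply Rmult_le_compat_l; [apply Rlt_le, Rdiv_lt_0_compat; lra| lra]).
  assert (B2 : eta / (2 * m_a P) * Rabs (pb x - pb S) <= eta / (2 * m_a P) * N)
    by (apply Rmult_le_compat_l; [apply Rlt_le, Rdiv_lt_0_compat; lra| lra]).
  assert (B3 : eta / m_b P * Rabs (pa x - pa S) <= eta / m_b P * N)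
    by (apply Rmult_le_compat_l; [apply Rlt_le, Rdiv_lt_0_compat; lra| lra]).
  apply nrm_le; unfold gP; simpl.
  - eapply Rle_trans; [apply Rabs_triang|].
    pose proof (abs_mul_le (m_a P) _ _ ltac:(lra) (Rle_trans _ _ _ A1 B1)).
    pose proof (abs_mul_le (m_a P) _ _ ltac:(lra) (Rle_trans _ _ _ A2 B2)).
    assert (m_a P * (eta / (2 * m_a P) * N) = eta * N / 2) by (field; lra).
    lra.
  - pose proof (abs_mul_le (m_b P) _ _ ltac:(lra) (Rle_trans _ _ _ A3 B3)).
    assert (m_b P * (eta / m_b P * N) = eta * N) by (field; lra). lra.
  - rewrite Rabs_R0. apply Rmult_le_pos; lra.
  - rewrite Rabs_R0. apply Rmult_le_pos; lra.
Qed.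

Theorem theorem3 (P : params) (S : state) :
  0 < m_a P -> 0 < m_b P -> 0 < gamma_a P -> 0 < gamma_b P ->
  0 < k_a P -> 0 < k_b P -> 0 < delta_a P -> 0 < delta_b P ->
  0 < theta_a P -> 0 < theta_b P -> 0 < theta_aa P ->
  0 <= A_1 P -> 0 <= B_1 P ->
  (0 < n_a P)%nat -> (0 < n_b P)%nat -> (0 < n_aa P)%nat ->
  steady_state P S -> 0 < pa S -> 0 < pb S ->
  0 < epsilon1 P -> 0 < epsilon3 P S -> 0 < epsilon4 P S ->
  0 < epsilon1 P * epsilon2 P S * epsilon3 P S - epsilon1 P ^ 2 * epsilon4 P S - epsilon3 P S ^ 2 ->
  locally_asymptotically_stable P S.
Proof.
  intros Hma Hmb Hga Hgb Hka Hkb Hda Hdb Hta Htb Htaa HA HB Hna Hnb Hnaa Hss Hpa Hpb He1 He3 He4 HD.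
  set (L := linP P S).
  assert (E1 : a1 L = epsilon1 P) by reflexivity.
  assert (E2 : a2 L = epsilon2 P S) by reflexivity.
  assert (E3 : a3 L = epsilon3 P S) by reflexivity.
  assert (E4 : a4 L = epsilon4 P S) by reflexivity.
  destruct (small_mu L) as [mu [Hmu [C1 [C3 [C4 CD]]]]]; try (rewrite E1, ?E2, ?E3, ?E4; auto); try (rewrite E3; auto); try (rewrite E4; auto).
  destruct (weights_pos L mu C1 C3 C4 CD) as [HDD [P2 [P3 P4]]].
  assert (HZ : jZ L <> 0).
  { simpl. unfold Zq. apply Rlt_not_eq. apply Ropp_lt_gt_0_contravar. unfold Rdiv.
    apply Rmult_lt_0_compat.
    - apply Rmult_lt_0_compat; [apply Rmult_lt_0_compat; [apply Rmult_lt_0_compat|]|].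
      + auto.
      + apply lt_0_INR; auto.
      + apply pow_lt; auto.
      + apply pow_lt; auto.
    - apply Rinv_0_lt_compat. apply pow_lt. pose proof (pow_lt _ (n_a P) Hpa). pose proof (pow_lt _ (n_a P) Hta). lra. }
  destruct (quadL_lower L mu ltac:(simpl; lra) ltac:(simpl; lra) HZ P2 P3 P4) as [m [Hm Hlow]].
  set (q := quadL L mu) in *.
  assert (Hq : qpos q).
  { unfold qpos, q, quadL; simpl. repeat split; try lra.
    - apply Rlt_le, Rmult_lt_0_compat; [apply Rmult_lt_0_compat|]; auto.
    - apply Rlt_le, Rmult_lt_0_compat; auto. }
  pose proof (Mq_ge0 q Hq) as HMq.
  set (eta := mu * m / (2 * Mq q + 1)).
  assert (Heta : 0 < eta) by (unfold eta; apply Rdiv_lt_0_compat; [apply Rmult_lt_0_compat|]; lra).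
  destruct (g_small P S Hma Hmb Hta Htb Htaa Hna Hnb Hnaa Hpa Hpb eta Heta) as [r [Hr Hg]].
  apply (lyap P S q m mu r Hq Hm Hmu Hr Hlow).
  intros x Hx.
  rewrite (Fv_decomp P S x Hss), Vdq_add.
  fold L. unfold q. rewrite lin_ident by lra. fold q.
  set (u := ssub x S) in *.
  set (N := nrm u) in *.
  pose proof (Vdq_bound q u (gP P S x) Hq) as Hb.
  specialize (Hg x Hx).
  pose proof (nrm_ge0 u) as HN. pose proof (nrm_ge0 (gP P S x)).
  assert (2 * Mq q * (N * nrm (gP P S x)) <= 2 * Mq q * (N * (eta * N))).
  { apply Rmult_le_compat_l; [lra|]. apply Rmult_le_compat_l; auto. }
  assert (2 * Mq q * (N * (eta * N)) = (2 * Mq q / (2 * Mq q + 1)) * (mu * (m * (N * N)))) by (unfold eta; field; lra).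
  assert (Hfr : 2 * Mq q / (2 * Mq q + 1) <= 1) by (apply (Rmult_le_reg_r (2 * Mq q + 1)); [lra|]; field_simplify; lra).
  assert (0 <= mu * (m * (N * N))) by (apply Rmult_le_pos; [lra| apply Rmult_le_pos; nra]).
  assert ((2 * Mq q / (2 * Mq q + 1)) * (mu * (m * (N * N))) <= mu * (m * (N * N))).
  { rewrite <- (Rmult_1_l (mu * (m * (N * N)))) at 2. apply Rmult_le_compat_r; auto. }
  assert (mu * (m * (N * N)) <= mu * Vq q u) by (apply Rmult_le_compat_l; [lra| apply Hlow]).
  assert (0 <= c1 L mu * ev (SS4 L mu) u ^ 2) by (apply Rmult_le_pos; [lra| apply pow2_ge_0]).
  pose proof (Rle_abs (Vdq q u (gP P S x))).
  fold N in Hb. lra.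
Qed.
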